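(* Let $0<\beta<\zeta$ (so that $\xi_2(\beta)<\xi_1(\beta)$). For $C\in(\xi_2(\beta),\xi_1(\beta))$ let $z_f^C\in(0,d)$ be the unique point such that $F_{z_f^C}\mathbf 1_{[0,z_f^C]}+G_{C,z_f^C}\mathbf 1_{(z_f^C,d]}$ solves Problem 1 with derivative $0$ at $0$ and value $C$ at $d$, and let $z_g^C\in(d,\infty)$ be the unique point such that $H_{C,z_g^C}\mathbf 1_{[d,z_g^C]}+K_{z_g^C}\mathbf 1_{(z_g^C,\infty)}$ is bounded and solves Problem 2 with value $C$ at $d$. (i) The map $(\xi_2(\beta),\xi_1(\beta))\to\mathbb R$, $C\mapsto G_{C,z_f^C}'(d)$ is strictly increasing, and $G_{\xi_1(\beta),d}'(d)=-\beta$. (ii) The map $(\xi_2(\beta),\xi_1(\beta))\to\mathbb R$, $C\mapsto H_{C,z_g^C}'(d)$ is strictly decreasing, and $H_{\xi_2(\beta),d}'(d)=-\beta$.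
   Context: Fix $\mu\in\mathbb R$, $\sigma>0$, $u_0>0$, $r>0$, $\beta>0$, $d>0$. For $u\in[0,u_0]$ let $\theta_1(u)=\frac{\sqrt{(\mu-u)^2+2r\sigma^2}+(\mu-u)}{\sigma^2}$, $\theta_2(u)=\frac{\sqrt{(\mu-u)^2+2r\sigma^2}-(\mu-u)}{\sigma^2}$; write $\alpha_i=\theta_i(u_0)$, $\gamma_i=\theta_i(0)$. Define $\zeta=\frac{\alpha_1\alpha_2(e^{\alpha_1d}-e^{-\alpha_2d})}{r(\alpha_1+\alpha_2)e^{\alpha_1d}}$, $\xi_1(\beta)=\frac{\beta u_0}{r}-\beta\frac{e^{\alpha_1d}+\frac{\alpha_1}{\alpha_2}e^{-\alpha_2d}}{\alpha_1(e^{\alpha_1d}-e^{-\alpha_2d})}$, $\xi_2(\beta)=\frac{\beta u_0-1}{r}+\frac{\beta}{\alpha_2}$. For $s\in(0,d]$, $t\ge d$, real $C$: $F_s(z)=\frac{\beta u_0}{r}-\beta\frac{e^{\alpha_1z}+\frac{\alpha_1}{\alpha_2}e^{-\alpha_2z}}{\alpha_1(e^{\alpha_1s}-e^{-\alpha_2s})}$; $G_{C,s}(z)=\frac{C\gamma_2e^{-\gamma_2(s-d)}-\beta}{\gamma_1e^{\gamma_1s}+\gamma_2e^{(\gamma_1+\gamma_2)d}e^{-\gamma_2s}}(e^{\gamma_1z}-e^{(\gamma_1+\gamma_2)d}e^{-\gamma_2z})+Ce^{-\gamma_2(z-d)}$; $H_{C,t}(z)=-\frac1r+\frac{C+\frac1r-\frac{\beta}{\gamma_2}e^{-\gamma_2(d-t)}}{e^{\gamma_1d}+\frac{\gamma_1}{\gamma_2}e^{(\gamma_1+\gamma_2)t}e^{-\gamma_2d}}(e^{\gamma_1z}+\frac{\gamma_1}{\gamma_2}e^{(\gamma_1+\gamma_2)t}e^{-\gamma_2z})+\frac{\beta}{\gamma_2}e^{-\gamma_2(z-t)}$;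 $K_t(z)=\frac{\beta u_0-1}{r}+\frac{\beta}{\alpha_2}e^{-\alpha_2(z-t)}$. Problem 1: a bounded $C^2$ function $f$ on $[0,d]$ with $-rf-\mu f'+\frac{\sigma^2}{2}f''+\sup_{u\in[0,u_0]}\{(\beta+f')u\}=0$ on $[0,d]$. Problem 2: a bounded $C^2$ function $g$ on $[d,\infty)$ with $-rg-\mu g'+\frac{\sigma^2}{2}g''+\sup_{u\in[0,u_0]}\{(\beta+g')u\}=1$ on $[d,\infty)$. (The existence and uniqueness of $z_f^C,z_g^C$ for $C$ in the stated interval is established in the paper.) *)

(* Defs.v *)
From Stdlib Require Import Reals.
From Coquelicot Require Import Coquelicot.
Open Scope R_scope.

Definition theta1 (mu sigma r u : R) : R :=
  (sqrt ((mu - u)^2 + 2 * r * sigma^2) + (mu - u)) / sigma^2.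
Definition theta2 (mu sigma r u : R) : R :=
  (sqrt ((mu - u)^2 + 2 * r * sigma^2) - (mu - u)) / sigma^2.

Definition alpha1 mu sigma u0 r := theta1 mu sigma r u0.
Definition alpha2 mu sigma u0 r := theta2 mu sigma r u0.
Definition gamma1 mu sigma r := theta1 mu sigma r 0.
Definition gamma2 mu sigma r := theta2 mu sigma r 0.

Definition zeta (mu sigma u0 r d : R) : R :=
  let a1 := alpha1 mu sigma u0 r in let a2 := alpha2 mu sigma u0 r in
  a1 * a2 * (exp (a1 * d) - exp (- a2 * d)) / (r * (a1 + a2) * exp (a1 * d)).

Definition xi1 (mu sigma u0 r d beta : R) : R :=
  let a1 := alpha1 mu sigma u0 r in let a2 := alpha2 mu sigma u0 r in
  beta * u0 / r
  - beta * (exp (a1 * d) + a1 / a2 * exp (- a2 * d)) / (a1 * (exp (a1 * d) - exp (- a2 * d))).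

Definition xi2 (mu sigma u0 r beta : R) : R :=
  (beta * u0 - 1) / r + beta / alpha2 mu sigma u0 r.

Definition Ffun (mu sigma u0 r beta s z : R) : R :=
  let a1 := alpha1 mu sigma u0 r in let a2 := alpha2 mu sigma u0 r in
  beta * u0 / r
  - beta * (exp (a1 * z) + a1 / a2 * exp (- a2 * z)) / (a1 * (exp (a1 * s) - exp (- a2 * s))).

Definition Gfun (mu sigma r d beta C s z : R) : R :=
  let g1 := gamma1 mu sigma r in let g2 := gamma2 mu sigma r in
  (C * g2 * exp (- g2 * (s - d)) - beta)
    / (g1 * exp (g1 * s) + g2 * exp ((g1 + g2) * d) * exp (- g2 * s))
    * (exp (g1 * z) - exp ((g1 + g2) * d) * exp (- g2 * z))
  + C * exp (- g2 * (z - d)).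

Definition Hfun (mu sigma r d beta C t z : R) : R :=
  let g1 := gamma1 mu sigma r in let g2 := gamma2 mu sigma r in
  - (1 / r)
  + (C + 1 / r - beta / g2 * exp (- g2 * (d - t)))
    / (exp (g1 * d) + g1 / g2 * exp ((g1 + g2) * t) * exp (- g2 * d))
    * (exp (g1 * z) + g1 / g2 * exp ((g1 + g2) * t) * exp (- g2 * z))
  + beta / g2 * exp (- g2 * (z - t)).

Definition Kfun (mu sigma u0 r beta t z : R) : R :=
  (beta * u0 - 1) / r + beta / alpha2 mu sigma u0 r * exp (- alpha2 mu sigma u0 r * (z - t)).

Definition Hsup (u0 beta p : R) : R :=
  real (Lub_Rbar (fun y => exists u, 0 <= u <= u0 /\ y = (beta + p) * u)).

Definition hjb (mu sigma u0 r beta rhs : R) (h : R -> R) (x : R) : Prop :=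
  ex_derive h x /\ ex_derive (Derive h) x /\ continuous (Derive_n h 2) x /\
  - r * h x - mu * Derive h x + sigma^2 / 2 * Derive_n h 2 x
    + Hsup u0 beta (Derive h x) = rhs.

Definition solves_P1 (mu sigma u0 r beta d : R) (h : R -> R) : Prop :=
  (exists M, forall x, 0 <= x <= d -> Rabs (h x) <= M) /\
  (forall x, 0 <= x <= d -> hjb mu sigma u0 r beta 0 h x).

Definition solves_P2 (mu sigma u0 r beta d : R) (h : R -> R) : Prop :=
  (exists M, forall x, d <= x -> Rabs (h x) <= M) /\
  (forall x, d <= x -> hjb mu sigma u0 r beta 1 h x).

Definition glue (f1 f2 : R -> R) (z : R) (x : R) : R :=
  if Rle_dec x z then f1 x else f2 x.

Definition candP1 (mu sigma u0 r d beta C z : R) : R -> R :=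
  glue (Ffun mu sigma u0 r beta z) (Gfun mu sigma r d beta C z) z.

Definition candP2 (mu sigma u0 r d beta C z : R) : R -> R :=
  glue (Hfun mu sigma r d beta C z) (Kfun mu sigma u0 r beta z) z.

Definition zf_prop (mu sigma u0 r d beta C z : R) : Prop :=
  0 < z < d /\
  solves_P1 mu sigma u0 r beta d (candP1 mu sigma u0 r d beta C z) /\
  Derive (candP1 mu sigma u0 r d beta C z) 0 = 0 /\
  candP1 mu sigma u0 r d beta C z d = C.

Definition zg_prop (mu sigma u0 r d beta C z : R) : Prop :=
  d < z /\
  solves_P2 mu sigma u0 r beta d (candP2 mu sigma u0 r d beta C z) /\
  candP2 mu sigma u0 r d beta C z d = C.

(* Main.v *)
Require Import Defs.
From Stdlib Require Import Reals Lra Psatz.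
From Coquelicot Require Import Coquelicot.
Open Scope R_scope.



Lemma glue_cont f1 f2 z : continuous (glue f1 f2 z) z -> continuous f2 z -> f1 z = f2 z.
Proof.
  intros H1 H2.
  apply continuity_pt_filterlim in H1. apply continuity_pt_filterlim in H2.
  destruct (Req_dec (f1 z) (f2 z)) as [E|NE]; [exact E|exfalso].
  set (e := Rabs (f1 z - f2 z)).
  assert (He : 0 < e) by (apply Rabs_pos_lt; lra).
  destruct (H1 (e/2) ltac:(lra)) as [a [Ha Pa]].
  destruct (H2 (e/2) ltac:(lra)) as [b [Hb Pb]].
  set (x := z + Rmin a b / 2).
  assert (Hm : 0 < Rmin a b) by (apply Rmin_pos; lra).
  assert (Hxa : Rmin a b <= a) by apply Rmin_l.
  assert (Hxb : Rmin a b <= b) by apply Rmin_r.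
  assert (Dx : R_dist x z = Rmin a b / 2).
  { unfold R_dist, x. rewrite Rabs_right; lra. }
  specialize (Pa x). specialize (Pb x). simpl in Pa, Pb.
  unfold dist in Pa, Pb; simpl in Pa, Pb.
  assert (A1 : R_dist (glue f1 f2 z x) (glue f1 f2 z z) < e/2).
  { apply Pa. split. unfold D_x, no_cond. split; [exact I| unfold x; lra]. lra. }
  assert (A2 : R_dist (f2 x) (f2 z) < e/2).
  { apply Pb. split. unfold D_x, no_cond. split; [exact I| unfold x; lra]. lra. }
  unfold glue in A1.
  destruct (Rle_dec x z) as [h|h]; [unfold x in h; lra|].
  destruct (Rle_dec z z) as [_|h']; [|lra].
  unfold R_dist in A1, A2.
  assert (Rabs (f1 z - f2 z) <= Rabs (f2 x - f1 z) + Rabs (f2 x - f2 z)).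
  { replace (f1 z - f2 z) with (-(f2 x - f1 z) + (f2 x - f2 z)) by ring.
    eapply Rle_trans. apply Rabs_triang. rewrite Rabs_Ropp. lra. }
  fold e in H. lra.
Qed.

Lemma exp_add a b : exp (a + b) = exp a * exp b.
Proof. apply exp_plus. Qed.
Lemma exp_neg a : exp (- a) = / exp a.
Proof. apply exp_Ropp. Qed.

Lemma Gfun_is_derive mu sigma r d beta C s z :
  let g1 := gamma1 mu sigma r in let g2 := gamma2 mu sigma r in
  is_derive (Gfun mu sigma r d beta C s) z
   ((C * g2 * exp (- g2 * (s - d)) - beta)
    / (g1 * exp (g1 * s) + g2 * exp ((g1 + g2) * d) * exp (- g2 * s))
    * (g1 * exp (g1 * z) + g2 * exp ((g1 + g2) * d) * exp (- g2 * z))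
    - C * g2 * exp (- g2 * (z - d))).
Proof.
  intros g1 g2. unfold Gfun. fold g1 g2.
  auto_derive. auto. match goal with |- ?a = ?b => change (@eq R a b) end. unfold Rminus. ring.
Qed.

Lemma G_identity (g1 g2 d beta C s Phi : R) :
  0 < g1 -> 0 < g2 ->
  (C * g2 * exp (- g2 * (s - d)) - beta)
    / (g1 * exp (g1 * s) + g2 * exp ((g1 + g2) * d) * exp (- g2 * s))
    * (exp (g1 * s) - exp ((g1 + g2) * d) * exp (- g2 * s))
  + C * exp (- g2 * (s - d)) = Phi ->
  let c1 := (g2 * Phi - beta) / (g1 + g2) in
  let c2 := (g1 * Phi + beta) / (g1 + g2) in
  C = c1 * exp (g1 * (d - s)) + c2 * exp (- g2 * (d - s)) /\
  (C * g2 * exp (- g2 * (s - d)) - beta)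
    / (g1 * exp (g1 * s) + g2 * exp ((g1 + g2) * d) * exp (- g2 * s))
    * (g1 * exp (g1 * d) + g2 * exp ((g1 + g2) * d) * exp (- g2 * d))
    - C * g2 * exp (- g2 * (d - d))
  = g1 * c1 * exp (g1 * (d - s)) - g2 * c2 * exp (- g2 * (d - s)).
Proof.
  intros h1 h2 HP c1 c2. subst c1 c2. subst Phi.
  replace (- g2 * (s - d)) with (g2 * d + - (g2 * s)) by ring.
  replace ((g1 + g2) * d) with (g1 * d + g2 * d) by ring.
  replace (- g2 * s) with (- (g2 * s)) by ring.
  replace (- g2 * d) with (- (g2 * d)) by ring.
  replace (g1 * (d - s)) with (g1 * d + - (g1 * s)) by ring.
  replace (- g2 * (d - s)) with (- (g2 * d) + g2 * s) by ring.
  replace (- g2 * (d - d)) with 0 by ring.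
  rewrite ?exp_add, ?exp_neg, exp_0.
  assert (X := exp_pos (g1 * s)). assert (Y := exp_pos (g2 * s)).
  assert (P := exp_pos (g1 * d)). assert (Q := exp_pos (g2 * d)).
  set (x := exp (g1 * s)) in *. set (y := exp (g2 * s)) in *.
  set (p := exp (g1 * d)) in *. set (q := exp (g2 * d)) in *.
  assert (0 < g1 * x + g2 * (p * q) * / y).
  { assert (0 < / y) by (apply Rinv_0_lt_compat; lra).
    assert (0 < g1 * x) by nra. assert (0 < p*q) by nra. assert (0 < g2*(p*q)) by nra. nra. }
  assert (0 < g1 * x * y + g2 * (p * q)) by (assert (0 < g1*x) by nra; assert (0 < p*q) by nra; nra).
  split; field; repeat split; lra.
Qed.


Lemma Hfun_is_derive mu sigma r d beta C t z :
  let g1 := gamma1 mu sigma r in let g2 := gamma2 mu sigma r in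
  0 < g1 -> 0 < g2 -> r <> 0 ->
  is_derive (Hfun mu sigma r d beta C t) z
   ((C + 1 / r - beta / g2 * exp (- g2 * (d - t)))
    / (exp (g1 * d) + g1 / g2 * exp ((g1 + g2) * t) * exp (- g2 * d))
    * (g1 * exp (g1 * z) - g1 * exp ((g1 + g2) * t) * exp (- g2 * z))
    - beta * exp (- g2 * (z - t))).
Proof.
  intros g1 g2 H1 H2 Hr. unfold Hfun. fold g1 g2.
  auto_derive. auto. match goal with |- ?a = ?b => change (@eq R a b) end. unfold Rminus. field.
  assert (A1 := exp_pos (g1 * d)). assert (A2 := exp_pos ((g1 + g2) * t)). assert (A3 := exp_pos (- g2 * d)).
  assert (0 < exp (g1 * d) * g2) by nra. assert (0 < g1 * exp ((g1 + g2) * t)) by nra.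
  assert (0 < g1 * exp ((g1 + g2) * t) * exp (- g2 * d)) by nra.
  repeat split; lra.
Qed.

Lemma H_identity (g1 g2 d beta C t V r : R) :
  0 < g1 -> 0 < g2 -> r <> 0 ->
  - (1 / r)
  + (C + 1 / r - beta / g2 * exp (- g2 * (d - t)))
    / (exp (g1 * d) + g1 / g2 * exp ((g1 + g2) * t) * exp (- g2 * d))
    * (exp (g1 * t) + g1 / g2 * exp ((g1 + g2) * t) * exp (- g2 * t))
  + beta / g2 * exp (- g2 * (t - t)) = V ->
  let c1 := (g2 * (V + 1/r) - beta) / (g1 + g2) in
  let c2 := (g1 * (V + 1/r) + beta) / (g1 + g2) in
  C = - (1/r) + c1 * exp (- g1 * (t - d)) + c2 * exp (g2 * (t - d)) /\
  (C + 1 / r - beta / g2 * exp (- g2 * (d - t)))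
    / (exp (g1 * d) + g1 / g2 * exp ((g1 + g2) * t) * exp (- g2 * d))
    * (g1 * exp (g1 * d) - g1 * exp ((g1 + g2) * t) * exp (- g2 * d))
    - beta * exp (- g2 * (d - t))
  = g1 * c1 * exp (- g1 * (t - d)) - g2 * c2 * exp (g2 * (t - d)).
Proof.
  intros h1 h2 hr HP c1 c2. subst c1 c2. subst V.
  replace (- g2 * (d - t)) with (- (g2 * d) + g2 * t) by ring.
  replace ((g1 + g2) * t) with (g1 * t + g2 * t) by ring.
  replace (- g2 * t) with (- (g2 * t)) by ring.
  replace (- g2 * d) with (- (g2 * d)) by ring.
  replace (- g1 * (t - d)) with (- (g1 * t) + g1 * d) by ring.
  replace (g2 * (t - d)) with (g2 * t + - (g2 * d)) by ring.
  replace (- g2 * (t - t)) with 0 by ring.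
  rewrite ?exp_add, ?exp_neg, exp_0.
  assert (X := exp_pos (g1 * t)). assert (Y := exp_pos (g2 * t)).
  assert (P := exp_pos (g1 * d)). assert (Q := exp_pos (g2 * d)).
  set (x := exp (g1 * t)) in *. set (y := exp (g2 * t)) in *.
  set (p := exp (g1 * d)) in *. set (q := exp (g2 * d)) in *.
  assert (0 < p * g2 * q + g1 * (x * y)) by (assert (0 < p*g2) by nra; assert (0 < p*g2*q) by nra; assert (0 < x*y) by nra; nra).
  split; field; repeat split; lra.
Qed.

Lemma theta_facts mu sigma r u : 0 < sigma -> 0 < r ->
  0 < theta1 mu sigma r u /\ 0 < theta2 mu sigma r u /\
  theta1 mu sigma r u * theta2 mu sigma r u = 2 * r / sigma^2 /\
  theta1 mu sigma r u - theta2 mu sigma r u = 2 * (mu - u) / sigma^2.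
Proof.
  intros hs hr. unfold theta1, theta2.
  set (m := mu - u).
  assert (hrs : 0 < r * sigma^2) by (apply Rmult_lt_0_compat; [lra| apply pow_lt; lra]).
  assert (h0 : 0 <= m^2 + 2*r*sigma^2) by nra.
  assert (HS := sqrt_sqrt _ h0).
  assert (HS0 := sqrt_pos (m^2 + 2*r*sigma^2)).
  set (S := sqrt (m^2 + 2*r*sigma^2)) in *.
  assert (S > m) by nra. assert (S > - m) by nra.
  assert (hs2 : 0 < sigma^2) by nra.
  split; [|split; [|split]].
  - apply Rdiv_lt_0_compat; lra.
  - apply Rdiv_lt_0_compat; lra.
  - replace ((S + m) / sigma ^ 2 * ((S - m) / sigma ^ 2)) with ((S*S - m*m)/(sigma^2*sigma^2)) by (field; lra).
    rewrite HS. field. lra.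
  - field. lra.
Qed.

Lemma Phi_is_derive a1 a2 b c s : 0 < a1 -> 0 < a2 -> 0 < s ->
  let X := exp (a1 * s) in let Y := exp (- a2 * s) in
  is_derive (fun s => c - b * (exp (a1 * s) + a1 / a2 * exp (- a2 * s)) / (a1 * (exp (a1 * s) - exp (- a2 * s)))) s
    (- b + b * (X + a1 / a2 * Y) * (a1 * X + a2 * Y) / (a1 * (X - Y)^2)).
Proof.
  intros h1 h2 hs X Y.
  assert (X > 1). { unfold X. rewrite <- exp_0. apply exp_increasing. nra. }
  assert (Y < 1). { unfold Y. rewrite <- exp_0. apply exp_increasing. nra. }
  auto_derive.
  - fold X Y. intro. assert (a1 * (X - Y) > 0) by nra. lra.
  - fold X Y. match goal with |- ?a = ?b => change (@eq R a b) end. field.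
    split; [lra|]. split; [lra|]. lra.
Qed.

Lemma T_is_derive g1 g2 d beta (Phi : R -> R) s Phi1 :
  g1 + g2 <> 0 -> is_derive Phi s Phi1 ->
  is_derive (fun s => (g2 * Phi s - beta) / (g1 + g2) * exp (g1 * (d - s))
                      + (g1 * Phi s + beta) / (g1 + g2) * exp (- g2 * (d - s))) s
   ((exp (g1 * (d - s)) * (g2 * (Phi1 + beta) + ((g1 - g2) * beta - g1 * g2 * Phi s))
     + exp (- g2 * (d - s)) * (g1 * (Phi1 + beta) - ((g1 - g2) * beta - g1 * g2 * Phi s))) / (g1 + g2)).
Proof.
  intros hg HP.
  auto_derive.
  - repeat split; exact (ex_intro _ Phi1 HP).
  - change (fun x : R => Phi x) with Phi. rewrite (is_derive_unique _ _ _ HP).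
    match goal with |- ?a = ?b => change (@eq R a b) end. unfold Rminus. field. exact hg.
Qed.

Lemma P_is_derive g1 g2 d beta (Phi : R -> R) s Phi1 :
  g1 + g2 <> 0 -> is_derive Phi s Phi1 ->
  is_derive (fun s => g1 * ((g2 * Phi s - beta) / (g1 + g2)) * exp (g1 * (d - s))
                      - g2 * ((g1 * Phi s + beta) / (g1 + g2)) * exp (- g2 * (d - s))) s
   ((g1 * exp (g1 * (d - s)) * (g2 * (Phi1 + beta) + ((g1 - g2) * beta - g1 * g2 * Phi s))
     - g2 * exp (- g2 * (d - s)) * (g1 * (Phi1 + beta) - ((g1 - g2) * beta - g1 * g2 * Phi s))) / (g1 + g2)).
Proof.
  intros hg HP.
  auto_derive.
  - repeat split; exact (ex_intro _ Phi1 HP).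
  - change (fun x : R => Phi x) with Phi. rewrite (is_derive_unique _ _ _ HP).
    match goal with |- ?a = ?b => change (@eq R a b) end. unfold Rminus. field. exact hg.
Qed.

Lemma pos_T g1 g2 v0 v1 E1 E2 : 0 < g1 -> 0 < g2 -> 0 < v0 -> 0 < v1 -> 1 <= E1 -> 0 < E2 <= 1 ->
  0 < (E1 * (g2 * v0 + v1) + E2 * (g1 * v0 - v1)) / (g1 + g2) /\
  0 < (g1 * E1 * (g2 * v0 + v1) - g2 * E2 * (g1 * v0 - v1)) / (g1 + g2).
Proof.
  intros. split; apply Rdiv_lt_0_compat; try lra.
  - destruct (Rle_lt_dec 0 (g1 * v0 - v1)).
    + assert (0 < g2*v0) by nra. nra.
    + assert (0 < g2*v0) by nra. nra.
  - destruct (Rle_lt_dec 0 (g1 * v0 - v1)).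
    + assert (0 < g2*v0) by nra. assert (g2 * E2 * (g1 * v0 - v1) <= g2 * (g1 * v0 - v1)).
      { assert (0 <= g2 * (g1 * v0 - v1)) by nra. nra. }
      assert (g1 * (g2 * v0 + v1) <= g1 * E1 * (g2 * v0 + v1)).
      { assert (0 <= g1 * (g2 * v0 + v1)) by nra. nra. }
      assert (0 < g1 * v1) by nra. nra.
    + assert (0 < g2*v0) by nra. assert (0 < g1 * E1) by nra.
      assert (0 < g1 * E1 * (g2 * v0 + v1)) by nra. assert (0 < g2 * E2) by nra.
      assert (g2 * E2 * (g1 * v0 - v1) < 0) by nra. nra.
Qed.

Lemma v1_alg a1 a2 sigma mu u0 r beta X Y : 0 < a1 -> 0 < a2 -> 0 < sigma -> Y < X ->
  0 < r ->
  a1 * a2 = 2 * r / sigma^2 -> a1 - a2 = 2 * (mu - u0) / sigma^2 ->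
  mu * beta - r * (beta * u0 / r - beta * (X + a1 / a2 * Y) / (a1 * (X - Y)))
  = beta * sigma^2 / 2 * (a1 * X + a2 * Y) / (X - Y).
Proof.
  intros h1 h2 hs hxy hr e1 e2.
  assert (hs2 : 0 < sigma^2) by (apply pow_lt; lra).
  assert (Hr : r = a1 * a2 * sigma^2 / 2) by (rewrite e1; field; lra).
  assert (Hu : u0 = mu - sigma^2 * (a1 - a2) / 2) by (rewrite e2; field; lra).
  subst u0. rewrite Hr. field. repeat split; nra.
Qed.

Lemma v1_pos mu sigma u0 r beta a1 a2 g1 g2 X Y : 0 < a1 -> 0 < a2 -> 0 < sigma -> Y < X ->
  0 < r -> 0 < beta -> 0 < X -> 0 < Y ->
  a1 * a2 = 2 * r / sigma^2 -> a1 - a2 = 2 * (mu - u0) / sigma^2 ->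
  g1 * g2 = 2 * r / sigma^2 -> g1 - g2 = 2 * (mu - 0) / sigma^2 ->
  0 < (g1 - g2) * beta - g1 * g2 * (beta * u0 / r - beta * (X + a1 / a2 * Y) / (a1 * (X - Y))).
Proof.
  intros h1 h2 hs hxy hr hb hX hY e1 e2 e3 e4.
  rewrite e3, e4.
  assert (hs2 : 0 < sigma^2) by (apply pow_lt; lra).
  replace (2 * (mu - 0) / sigma ^ 2 * beta - 2 * r / sigma ^ 2 * (beta * u0 / r - beta * (X + a1 / a2 * Y) / (a1 * (X - Y))))
    with (2 / sigma^2 * (mu * beta - r * (beta * u0 / r - beta * (X + a1 / a2 * Y) / (a1 * (X - Y))))) by (field; repeat split; nra).
  rewrite (v1_alg a1 a2 sigma mu u0 r beta X Y); auto.
  apply Rmult_lt_0_compat. apply Rdiv_lt_0_compat; lra.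
  apply Rdiv_lt_0_compat; [|lra].
  apply Rmult_lt_0_compat; [|nra]. apply Rdiv_lt_0_compat; nra.
Qed.

Lemma v0_pos a1 a2 beta X Y : 0 < a1 -> 0 < a2 -> 0 < beta -> 0 < Y -> Y < X ->
  0 < (- beta + beta * (X + a1 / a2 * Y) * (a1 * X + a2 * Y) / (a1 * (X - Y)^2)) + beta.
Proof.
  intros. replace ((- beta + beta * (X + a1 / a2 * Y) * (a1 * X + a2 * Y) / (a1 * (X - Y)^2)) + beta)
   with (beta * (X + a1 / a2 * Y) * (a1 * X + a2 * Y) / (a1 * (X - Y)^2)) by ring.
  assert (0 < a1 / a2 * Y) by (apply Rmult_lt_0_compat; [apply Rdiv_lt_0_compat|]; lra).
  apply Rdiv_lt_0_compat.
  - apply Rmult_lt_0_compat; [apply Rmult_lt_0_compat|]; nra.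
  - apply Rmult_lt_0_compat; [lra|]. apply pow_lt. lra.
Qed.

Lemma w_alg a1 a2 g1 g2 sigma mu u0 r beta : 0 < a1 -> 0 < a2 -> 0 < g1 -> 0 < g2 -> 0 < sigma -> 0 < r ->
  a1 * a2 = 2 * r / sigma^2 -> a1 - a2 = 2 * (mu - u0) / sigma^2 ->
  g1 * g2 = 2 * r / sigma^2 -> g1 - g2 = 2 * (mu - 0) / sigma^2 ->
  let V := (beta * u0 - 1) / r + beta / a2 in
  let c1 := (g2 * (V + 1/r) - beta) / (g1 + g2) in
  let c2 := (g1 * (V + 1/r) + beta) / (g1 + g2) in
  g1 * g1 * c1 + g2 * g2 * c2 = beta * a2 /\ - g1 * c1 + g2 * c2 = beta /\
  V + 1/r = beta * u0 / r + beta / a2.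
Proof.
  intros h1 h2 h3 h4 hs hr e1 e2 e3 e4 V c1 c2.
  assert (hs2 : 0 < sigma^2) by (apply pow_lt; lra).
  split; [|split].
  - transitivity (g1 * g2 * (V + 1/r) - (g1 - g2) * beta).
    { unfold c1, c2. field. lra. }
    rewrite e3, e4. unfold V.
    assert (Hr : r = a1 * a2 * sigma^2 / 2) by (rewrite e1; field; lra).
    assert (Hu : u0 = mu - sigma^2 * (a1 - a2) / 2) by (rewrite e2; field; lra).
    subst u0. rewrite Hr. field. repeat split; nra.
  - unfold c1, c2. field. lra.
  - unfold V. field. lra.
Qed.

Lemma pos_H g1 g2 c1 c2 E1 E2 beta w : 0 < g1 -> 0 < g2 -> 0 < c2 -> 0 < beta ->
  - g1 * c1 + g2 * c2 = beta -> g1 * g1 * c1 + g2 * g2 * c2 = w -> 0 < w ->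
  0 < E1 <= 1 -> 1 <= E2 ->
  0 < - g1 * c1 * E1 + g2 * c2 * E2 /\ 0 < g1 * g1 * c1 * E1 + g2 * g2 * c2 * E2.
Proof.
  intros h1 h2 h3 hb e1 e2 hw hE1 hE2.
  assert (0 < g2 * c2) by nra. assert (0 < g2 * g2 * c2) by nra.
  assert (g2 * c2 <= g2 * c2 * E2) by nra.
  assert (g2 * g2 * c2 <= g2 * g2 * c2 * E2) by nra.
  split; destruct (Rle_lt_dec 0 c1).
  - assert (0 <= g1 * c1) by (apply Rmult_le_pos; lra).
    assert (g1 * c1 * E1 <= g1 * c1 * 1) by (apply Rmult_le_compat_l; lra). nra.
  - assert (g1 * c1 < 0) by (apply Rmult_pos_neg; lra).
    assert (g1 * c1 * E1 < 0) by (apply Rmult_neg_pos; lra). nra.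
  - assert (0 <= g1 * g1 * c1) by (apply Rmult_le_pos; nra).
    assert (0 <= g1 * g1 * c1 * E1) by (apply Rmult_le_pos; lra). nra.
  - assert (g1 * g1 * c1 < 0) by (apply Rmult_pos_neg; nra).
    assert (g1 * g1 * c1 * 1 <= g1 * g1 * c1 * E1) by (apply Rmult_le_compat_neg_l; lra). nra.
Qed.

Theorem lemma4p7 (mu sigma u0 r d beta : R) (zf zg : R -> R) :
  0 < sigma -> 0 < u0 -> 0 < r -> 0 < d -> 0 < beta ->
  beta < zeta mu sigma u0 r d ->
  (forall C, xi2 mu sigma u0 r beta < C < xi1 mu sigma u0 r d beta ->
     zf_prop mu sigma u0 r d beta C (zf C) /\
     (forall z, zf_prop mu sigma u0 r d beta C z -> z = zf C)) ->
  (forall C, xi2 mu sigma u0 r beta < C < xi1 mu sigma u0 r d beta ->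
     zg_prop mu sigma u0 r d beta C (zg C) /\
     (forall z, zg_prop mu sigma u0 r d beta C z -> z = zg C)) ->
  ((forall C1 C2,
      xi2 mu sigma u0 r beta < C1 -> C1 < C2 -> C2 < xi1 mu sigma u0 r d beta ->
      Derive (Gfun mu sigma r d beta C1 (zf C1)) d
        < Derive (Gfun mu sigma r d beta C2 (zf C2)) d) /\
   Derive (Gfun mu sigma r d beta (xi1 mu sigma u0 r d beta) d) d = - beta) /\
  ((forall C1 C2,
      xi2 mu sigma u0 r beta < C1 -> C1 < C2 -> C2 < xi1 mu sigma u0 r d beta ->
      Derive (Hfun mu sigma r d beta C2 (zg C2)) d
        < Derive (Hfun mu sigma r d beta C1 (zg C1)) d) /\
   Derive (Hfun mu sigma r d beta (xi2 mu sigma u0 r beta) d) d = - beta).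
Proof.
  intros hs hu0 hr hd hb _ Hf Hg.
  destruct (theta_facts mu sigma r u0 hs hr) as [a1p [a2p [ea1 ea2]]].
  destruct (theta_facts mu sigma r 0 hs hr) as [g1p [g2p [eg1 eg2]]].
  change (theta1 mu sigma r u0) with (alpha1 mu sigma u0 r) in *.
  change (theta2 mu sigma r u0) with (alpha2 mu sigma u0 r) in *.
  change (theta1 mu sigma r 0) with (gamma1 mu sigma r) in *.
  change (theta2 mu sigma r 0) with (gamma2 mu sigma r) in *.
  set (a1 := alpha1 mu sigma u0 r) in *.
  set (a2 := alpha2 mu sigma u0 r) in *.
  set (g1 := gamma1 mu sigma r) in *.
  set (g2 := gamma2 mu sigma r) in *.
  set (x1 := xi1 mu sigma u0 r d beta).
  set (x2 := xi2 mu sigma u0 r beta).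
  split; split.
  -
    set (Phi := fun s => Ffun mu sigma u0 r beta s s).
    set (Phi1 := fun x => - beta + beta * (exp (a1 * x) + a1 / a2 * exp (- a2 * x))
                   * (a1 * exp (a1 * x) + a2 * exp (- a2 * x)) / (a1 * (exp (a1 * x) - exp (- a2 * x))^2)).
    set (Tf := fun s => (g2 * Phi s - beta) / (g1 + g2) * exp (g1 * (d - s))
                      + (g1 * Phi s + beta) / (g1 + g2) * exp (- g2 * (d - s))).
    set (Pf := fun s => g1 * ((g2 * Phi s - beta) / (g1 + g2)) * exp (g1 * (d - s))
                      - g2 * ((g1 * Phi s + beta) / (g1 + g2)) * exp (- g2 * (d - s))).
    assert (K1 : forall C, x2 < C < x1 -> 0 < zf C < d /\ C = Tf (zf C) /\
               Derive (Gfun mu sigma r d beta C (zf C)) d = Pf (zf C)).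
    { intros C HC. destruct (Hf C HC) as [[hz [[_ Hsol] _]] _].
      set (s := zf C) in *.
      destruct (Hsol s ltac:(lra)) as [Hex _].
      assert (HGd : forall z, is_derive (Gfun mu sigma r d beta C s) z
         ((C * g2 * exp (- g2 * (s - d)) - beta)
          / (g1 * exp (g1 * s) + g2 * exp ((g1 + g2) * d) * exp (- g2 * s))
          * (g1 * exp (g1 * z) + g2 * exp ((g1 + g2) * d) * exp (- g2 * z))
          - C * g2 * exp (- g2 * (z - d)))).
      { intro z. exact (Gfun_is_derive mu sigma r d beta C s z). }
      assert (E : Ffun mu sigma u0 r beta s s = Gfun mu sigma r d beta C s s).
      { apply (glue_cont (Ffun mu sigma u0 r beta s) (Gfun mu sigma r d beta C s) s).
        - exact (ex_derive_continuous _ _ Hex).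
        - exact (ex_derive_continuous _ _ (ex_intro _ _ (HGd s))). }
      destruct (G_identity g1 g2 d beta C s (Phi s) g1p g2p) as [I1 I2].
      { unfold Phi. rewrite E. reflexivity. }
      split; [exact hz|]. split; [exact I1|].
      rewrite (is_derive_unique _ _ _ (HGd d)). exact I2. }
    assert (Tinc : forall x y, 0 < x -> x < y -> y < d -> Tf x < Tf y /\ Pf x < Pf y).
    { intros x y hx hxy hy.
      assert (HD : forall z, 0 < z < d ->
        is_derive Tf z ((exp (g1 * (d - z)) * (g2 * (Phi1 z + beta) + ((g1 - g2) * beta - g1 * g2 * Phi z))
          + exp (- g2 * (d - z)) * (g1 * (Phi1 z + beta) - ((g1 - g2) * beta - g1 * g2 * Phi z))) / (g1 + g2)) /\
        is_derive Pf z ((g1 * exp (g1 * (d - z)) * (g2 * (Phi1 z + beta) + ((g1 - g2) * beta - g1 * g2 * Phi z))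
          - g2 * exp (- g2 * (d - z)) * (g1 * (Phi1 z + beta) - ((g1 - g2) * beta - g1 * g2 * Phi z))) / (g1 + g2)) /\
        0 < (exp (g1 * (d - z)) * (g2 * (Phi1 z + beta) + ((g1 - g2) * beta - g1 * g2 * Phi z))
          + exp (- g2 * (d - z)) * (g1 * (Phi1 z + beta) - ((g1 - g2) * beta - g1 * g2 * Phi z))) / (g1 + g2) /\
        0 < (g1 * exp (g1 * (d - z)) * (g2 * (Phi1 z + beta) + ((g1 - g2) * beta - g1 * g2 * Phi z))
          - g2 * exp (- g2 * (d - z)) * (g1 * (Phi1 z + beta) - ((g1 - g2) * beta - g1 * g2 * Phi z))) / (g1 + g2)).
      { intros z hz.
        assert (HP : is_derive Phi z (Phi1 z)).
        { exact (Phi_is_derive a1 a2 beta (beta * u0 / r) z a1p a2p (proj1 hz)). }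
        assert (hg : g1 + g2 <> 0) by lra.
        assert (HX : exp (a1 * z) > 1). { rewrite <- exp_0. apply exp_increasing. nra. }
        assert (HY : exp (- a2 * z) < 1). { rewrite <- exp_0. apply exp_increasing. nra. }
        assert (HY0 := exp_pos (- a2 * z)).
        assert (E1 : 1 <= exp (g1 * (d - z))). { rewrite <- exp_0. left. apply exp_increasing. nra. }
        assert (E2 : exp (- g2 * (d - z)) <= 1). { rewrite <- exp_0. left. apply exp_increasing. nra. }
        assert (E20 := exp_pos (- g2 * (d - z))).
        assert (v0 : 0 < Phi1 z + beta).
        { apply (v0_pos a1 a2 beta (exp (a1 * z)) (exp (- a2 * z))); lra. }
        assert (v1 : 0 < (g1 - g2) * beta - g1 * g2 * Phi z).
        { apply (v1_pos mu sigma u0 r beta a1 a2 g1 g2 (exp (a1 * z)) (exp (- a2 * z))); try lra; auto. }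
        destruct (pos_T g1 g2 _ _ _ _ g1p g2p v0 v1 E1 (conj E20 E2)) as [p1 p2].
        split; [|split; [|split]].
        - exact (T_is_derive g1 g2 d beta Phi z (Phi1 z) hg HP).
        - exact (P_is_derive g1 g2 d beta Phi z (Phi1 z) hg HP).
        - exact p1.
        - exact p2. }
      split.
      - apply (incr_function Tf 0 d (fun z => (exp (g1 * (d - z)) * (g2 * (Phi1 z + beta) + ((g1 - g2) * beta - g1 * g2 * Phi z))
          + exp (- g2 * (d - z)) * (g1 * (Phi1 z + beta) - ((g1 - g2) * beta - g1 * g2 * Phi z))) / (g1 + g2))); simpl; try lra.
        + intros z h1 h2. apply (HD z (conj h1 h2)).
        + intros z h1 h2. apply (HD z (conj h1 h2)).
      - apply (incr_function Pf 0 d (fun z => (g1 * exp (g1 * (d - z)) * (g2 * (Phi1 z + beta) + ((g1 - g2) * beta - g1 * g2 * Phi z))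
          - g2 * exp (- g2 * (d - z)) * (g1 * (Phi1 z + beta) - ((g1 - g2) * beta - g1 * g2 * Phi z))) / (g1 + g2))); simpl; try lra.
        + intros z h1 h2. apply (HD z (conj h1 h2)).
        + intros z h1 h2. apply (HD z (conj h1 h2)). }
    intros C1 C2 h1 h12 h2.
    destruct (K1 C1 ltac:(lra)) as [s1 [T1 P1]].
    destruct (K1 C2 ltac:(lra)) as [s2 [T2 P2]].
    rewrite P1, P2.
    destruct (Rlt_le_dec (zf C1) (zf C2)) as [lt|le].
    + apply (Tinc _ _ (proj1 s1) lt (proj2 s2)).
    + exfalso. destruct (Rle_lt_or_eq_dec _ _ le) as [lt'|eq].
      * destruct (Tinc _ _ (proj1 s2) lt' (proj2 s1)) as [A _]. lra.
      * rewrite eq in T2. lra.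
  -
    rewrite (is_derive_unique _ _ _ (Gfun_is_derive mu sigma r d beta x1 d d)).
    fold g1 g2.
    replace (- g2 * (d - d)) with 0 by ring. rewrite exp_0.
    assert (0 < g1 * exp (g1 * d)) by (apply Rmult_lt_0_compat; [lra| apply exp_pos]).
    assert (0 < g2 * exp ((g1 + g2) * d) * exp (- g2 * d)).
    { apply Rmult_lt_0_compat; [apply Rmult_lt_0_compat|]; try apply exp_pos; lra. }
    field. lra.
  -
    assert (hr' : r <> 0) by lra.
    set (V := (beta * u0 - 1) / r + beta / a2).
    set (c1 := (g2 * (V + 1/r) - beta) / (g1 + g2)).
    set (c2 := (g1 * (V + 1/r) + beta) / (g1 + g2)).
    set (Cf := fun t => - (1/r) + c1 * exp (- g1 * (t - d)) + c2 * exp (g2 * (t - d))).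
    set (Pf := fun t => g1 * c1 * exp (- g1 * (t - d)) - g2 * c2 * exp (g2 * (t - d))).
    assert (K2 : forall C, x2 < C < x1 -> d < zg C /\ C = Cf (zg C) /\
               Derive (Hfun mu sigma r d beta C (zg C)) d = Pf (zg C)).
    { intros C HC. destruct (Hg C HC) as [[ht [[_ Hsol] _]] _].
      set (t := zg C) in *.
      destruct (Hsol t ltac:(lra)) as [Hex _].
      assert (HHd : forall z, is_derive (Hfun mu sigma r d beta C t) z
        ((C + 1 / r - beta / g2 * exp (- g2 * (d - t)))
         / (exp (g1 * d) + g1 / g2 * exp ((g1 + g2) * t) * exp (- g2 * d))
         * (g1 * exp (g1 * z) - g1 * exp ((g1 + g2) * t) * exp (- g2 * z))
         - beta * exp (- g2 * (z - t)))).
      { intro z. exact (Hfun_is_derive mu sigma r d beta C t z g1p g2p hr'). }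
      assert (E : Hfun mu sigma r d beta C t t = Kfun mu sigma u0 r beta t t).
      { apply (glue_cont (Hfun mu sigma r d beta C t) (Kfun mu sigma u0 r beta t) t).
        - exact (ex_derive_continuous _ _ Hex).
        - assert (HK : ex_derive (Kfun mu sigma u0 r beta t) t) by (unfold Kfun; auto_derive; auto).
          exact (ex_derive_continuous _ _ HK). }
      assert (EK : Kfun mu sigma u0 r beta t t = V).
      { unfold Kfun, V. change (alpha2 mu sigma u0 r) with a2.
        replace (- a2 * (t - t)) with 0 by ring. rewrite exp_0. ring. }
      destruct (H_identity g1 g2 d beta C t V r g1p g2p hr') as [I1 I2].
      { exact (eq_trans E EK). }
      split; [exact ht|]. split; [exact I1|].
      rewrite (is_derive_unique _ _ _ (HHd d)). exact I2. }
    destruct (w_alg a1 a2 g1 g2 sigma mu u0 r beta a1p a2p g1p g2p hs hr ea1 ea2 eg1 eg2) as [W1 [W2 W3]].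
    fold V c1 c2 in W1, W2, W3.
    assert (c2p : 0 < c2).
    { unfold c2. apply Rdiv_lt_0_compat; [|lra]. rewrite W3.
      assert (0 < beta * u0 / r) by (apply Rdiv_lt_0_compat; nra).
      assert (0 < beta / a2) by (apply Rdiv_lt_0_compat; nra). nra. }
    assert (wp : 0 < beta * a2) by nra.
    assert (Tinc : forall x y, d < x -> x < y -> Cf x < Cf y /\ Pf y < Pf x).
    { intros x y hx hxy.
      assert (HD : forall z, d < z ->
        is_derive Cf z (- g1 * c1 * exp (- g1 * (z - d)) + g2 * c2 * exp (g2 * (z - d))) /\
        is_derive (fun t => - Pf t) z (g1 * g1 * c1 * exp (- g1 * (z - d)) + g2 * g2 * c2 * exp (g2 * (z - d))) /\
        0 < - g1 * c1 * exp (- g1 * (z - d)) + g2 * c2 * exp (g2 * (z - d)) /\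
        0 < g1 * g1 * c1 * exp (- g1 * (z - d)) + g2 * g2 * c2 * exp (g2 * (z - d))).
      { intros z hz.
        assert (E1 : exp (- g1 * (z - d)) <= 1). { rewrite <- exp_0. left. apply exp_increasing. nra. }
        assert (E2 : 1 <= exp (g2 * (z - d))). { rewrite <- exp_0. left. apply exp_increasing. nra. }
        assert (E10 := exp_pos (- g1 * (z - d))).
        destruct (pos_H g1 g2 c1 c2 _ _ beta (beta * a2) g1p g2p c2p hb W2 W1 wp (conj E10 E1) E2) as [p1 p2].
        split; [|split; [|split]]; try assumption.
        - unfold Cf. auto_derive; auto. match goal with |- ?a = ?b => change (@eq R a b) end. unfold Rminus. ring.
        - unfold Pf. auto_derive; auto. match goal with |- ?a = ?b => change (@eq R a b) end. unfold Rminus. ring. }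
      split.
      - apply (incr_function Cf d p_infty (fun z => - g1 * c1 * exp (- g1 * (z - d)) + g2 * c2 * exp (g2 * (z - d)))); simpl; try lra; auto.
        + intros z h1 _. apply (HD z h1).
        + intros z h1 _. apply (HD z h1).
      - cut (- Pf x < - Pf y). { lra. }
        apply (incr_function (fun t => - Pf t) d p_infty (fun z => g1 * g1 * c1 * exp (- g1 * (z - d)) + g2 * g2 * c2 * exp (g2 * (z - d)))); simpl; try lra; auto.
        + intros z h1 _. apply (HD z h1).
        + intros z h1 _. apply (HD z h1). }
    intros C1 C2 h1 h12 h2.
    destruct (K2 C1 ltac:(lra)) as [s1 [T1 P1]].
    destruct (K2 C2 ltac:(lra)) as [s2 [T2 P2]].
    rewrite P1, P2.
    destruct (Rlt_le_dec (zg C1) (zg C2)) as [lt|le].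
    + apply (Tinc _ _ s1 lt).
    + exfalso. destruct (Rle_lt_or_eq_dec _ _ le) as [lt'|eq].
      * destruct (Tinc _ _ s2 lt') as [A _]. lra.
      * rewrite eq in T2. lra.
  -
    assert (hr' : r <> 0) by lra.
    rewrite (is_derive_unique _ _ _ (Hfun_is_derive mu sigma r d beta x2 d d g1p g2p hr')).
    fold g1 g2.
    replace (g1 * exp (g1 * d) - g1 * exp ((g1 + g2) * d) * exp (- g2 * d)) with 0.
    2:{ rewrite Rmult_assoc, <- exp_plus. replace ((g1 + g2) * d + - g2 * d) with (g1 * d) by ring. ring. }
    replace (- g2 * (d - d)) with 0 by ring. rewrite exp_0. ring.
Qed.
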